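(* Let $f:\mathbb{R}^n\to\mathbb{R}\cup\{+\infty\}$ be closed and convex, let $X\in\mathbb{R}^{n\times m}$ have rank $r$ with compact SVD $X=U_r\Sigma_r V_r^\top$, let $\gamma>0$, $k\ge0$. For an integer $q\ge0$ define $$p^*_{\rm con}(q)=\min_{w\in\mathbb{R}^m}\ f(Xw)\quad\text{s.t.}\quad \|w\|_0\le q,\ \|w\|_2^2\le\gamma,$$ $$p^{**}_{\rm con}(k)=\min_{v\in\mathbb{R}^m,\ u\in[0,1]^m}\ f(XD(u)v)\quad\text{s.t.}\quad \mathbf 1^\top u\le k,\ v^\top D(u)v\le\gamma .$$ Let $(v^*,u^* )$ be an optimal solution of the latter with optimal value $t^*$, let $z^*=\Sigma_rV_r^\top D(u^* )v^*$, let $\ell_i$ be the $i$-th column of $\Sigma_rV_r^\top$, let $c\sim\mathcal N(0,I_m)$, and consider the linear program in $u\in\mathbb{R}^m$: $$\min\ c^\top u\quad\text{s.t.}\quad \sum_{i=1}^m u_i\le k,\quad \sum_{i=1}^m u_i(v_i^* )^2\le\gamma,\quad \sum_{i=1}^m u_i\ell_iv_i^*=z^*,\quad u\in[0,1]^m.$$ Then, with probability one, from an optimal basic feasible solution $\bar u$ of this linear program one can construct the point $w=D(\bar u)v^*$ (with $S=\{i:\bar u_i\notin\{0,1\}\}$, $\tilde u_i=1,\tilde v_i=\bar u_iv_i^*$ for $i\in S$, $\tilde u_i=\bar u_i,\tilde v_i=v_i^*$ otherwise, $w=D(\tilde u)\tilde v$), whose objective value $\mathrm{OPT}=f(Xw)$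 satisfies $$p^*_{\rm con}(k+r+2)-\rho(f)\le\mathrm{OPT}\le p^{**}_{\rm con}(k)\le p^*_{\rm con}(k),$$ where $\rho(f)=\sup_{w}\big(f(Xw)-f^{**}(Xw)\big)\ge0$.
   Context: $\|w\|_0$ is the number of nonzero entries of $w$; $D(u)=\mathrm{diag}(u_1,\dots,u_m)$; $\mathbf 1$ is the all-ones vector. $f^*(y)=\sup_x x^\top y-f(x)$ is the convex conjugate and $f^{**}$ the biconjugate (convex envelope) of $f$; for closed convex $f$, $f^{**}=f$. *)

(* Defs.v *)
From HB Require Import structures.
From mathcomp Require Import all_boot all_order all_algebra.
From mathcomp Require Import all_classical all_reals ereal topology normedtype sequences.
Set Implicit Arguments. Unset Strict Implicit. Unset Printing Implicit Defensive.
Import Order.TTheory GRing.Theory Num.Theory numFieldNormedType.Exports.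
Local Open Scope ring_scope.
Local Open Scope classical_set_scope.

Section Defs.
Variable R : realType.

Definition Dg (m : nat) (u : 'cV[R]_m) : 'M[R]_m := diag_mx u^T.

Definition l0 (m : nat) (w : 'cV[R]_m) : nat := #|[set i : 'I_m | w i 0 != 0]|.

Definition ip (n : nat) (x y : 'cV[R]_n) : R := (x^T *m y) 0 0.

(* convexity of an extended-real-valued function: convex epigraph *)
Definition ext_convex (n : nat) (f : 'cV[R]_n -> \bar R) : Prop :=
  forall (x y : 'cV[R]_n) (a b l : R), 0 <= l <= 1 ->
    (f x <= a%:E)%E -> (f y <= b%:E)%E ->
    (f (l *: x + (1 - l) *: y)%R <= (l * a + (1 - l) * b)%R%:E)%E.

(* closedness: the epigraph is (sequentially) closed in R^n x R *)
Definition ext_closed (n : nat) (f : 'cV[R]_n -> \bar R) : Prop :=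
  forall (xs : nat -> 'cV[R]_n) (as_ : nat -> R) (x : 'cV[R]_n) (a : R),
    (forall k, (f (xs k) <= (as_ k)%:E)%E) ->
    (forall i, (fun k => xs k i 0) @ \oo --> x i 0) ->
    as_ @ \oo --> a ->
    (f x <= a%:E)%E.

Definition fconj (n : nat) (f : 'cV[R]_n -> \bar R) (y : 'cV[R]_n) : \bar R :=
  ereal_sup [set ((ip x y)%:E - f x)%E | x in [set: 'cV[R]_n]].

Definition fbiconj (n : nat) (f : 'cV[R]_n -> \bar R) (x : 'cV[R]_n) : \bar R :=
  fconj (fconj f) x.

Definition rho (n m : nat) (f : 'cV[R]_n -> \bar R) (X : 'M[R]_(n, m)) : \bar R :=
  ereal_sup [set (f (X *m w)%R - fbiconj f (X *m w)%R)%E | w in [set: 'cV[R]_m]].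

Definition pcon (n m : nat) (f : 'cV[R]_n -> \bar R) (X : 'M[R]_(n, m))
  (gamma : R) (q : nat) : \bar R :=
  ereal_inf [set f (X *m w) | w in [set w : 'cV[R]_m | (l0 w <= q)%N /\ ip w w <= gamma]].

Definition relax_feas (m : nat) (gamma : R) (k : nat) (v u : 'cV[R]_m) : Prop :=
  (forall i, 0 <= u i 0 <= 1) /\ \sum_i u i 0 <= k%:R /\ ip v (Dg u *m v) <= gamma.

Definition pcon2 (n m : nat) (f : 'cV[R]_n -> \bar R) (X : 'M[R]_(n, m))
  (gamma : R) (k : nat) : \bar R :=
  ereal_inf [set f (X *m (Dg vu.2 *m vu.1)) | vu in [set vu : 'cV[R]_m * 'cV[R]_m |
                                               relax_feas gamma k vu.1 vu.2]].

Definition poly_feas (p q m : nat) (Aineq : 'M[R]_(p, m)) (bineq : 'cV[R]_p)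
  (Aeq : 'M[R]_(q, m)) (beq : 'cV[R]_q) (u : 'cV[R]_m) : Prop :=
  (forall j, (Aineq *m u) j 0 <= bineq j 0) /\ Aeq *m u = beq.

(* Basic feasible solution: feasible and the active constraints (all equalities
   and the tight inequalities) contain m linearly independent rows *)
Definition is_bfs (p q m : nat) (Aineq : 'M[R]_(p, m)) (bineq : 'cV[R]_p)
  (Aeq : 'M[R]_(q, m)) (beq : 'cV[R]_q) (u : 'cV[R]_m) : Prop :=
  poly_feas Aineq bineq Aeq beq u /\
  \rank (col_mx (\matrix_(j < p, i < m)
                   (if (Aineq *m u) j 0 == bineq j 0 then Aineq j i else 0))
                Aeq) = m.

(* LP data of Corollary 4.1.  Inequalities: 1^T u <= k; sum u_i (v_i)^2 <= gamma;
   -u_i <= 0; u_i <= 1.  Equalities: sum_i u_i l_i v_i = z, where l_i is the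
   i-th column of L (= Sigma_r V_r^T). *)
Definition lp_Aineq (m : nat) (v : 'cV[R]_m) : 'M[R]_(1 + (1 + (m + m)), m) :=
  col_mx (const_mx 1) (col_mx (\row_i (v i 0 ^+ 2)) (col_mx (- 1%:M) 1%:M)).
Definition lp_bineq (m : nat) (gamma : R) (k : nat) : 'cV[R]_(1 + (1 + (m + m))) :=
  col_mx (k%:R)%:M (col_mx gamma%:M (col_mx 0 (const_mx 1))).
Definition lp_Aeq (r m : nat) (L : 'M[R]_(r, m)) (v : 'cV[R]_m) : 'M[R]_(r, m) :=
  \matrix_(j < r, i < m) (L j i * v i 0).

Definition frac (x : R) : bool := (x != 0) && (x != 1).
Definition utilde (m : nat) (ub : 'cV[R]_m) : 'cV[R]_m :=
  \col_i (if frac (ub i 0) then 1 else ub i 0).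
Definition vtilde (m : nat) (ub v : 'cV[R]_m) : 'cV[R]_m :=
  \col_i (if frac (ub i 0) then ub i 0 * v i 0 else v i 0).

End Defs.

(* Main.v *)
Require Import Defs.
From HB Require Import structures.
From mathcomp Require Import all_boot all_order all_algebra.
From mathcomp Require Import all_classical all_reals ereal topology normedtype sequences.
From mathcomp Require Import zify ring lra.
Import Order.TTheory GRing.Theory Num.Theory numFieldNormedType.Exports.
Set Implicit Arguments. Unset Strict Implicit. Unset Printing Implicit Defensive.
Local Open Scope ring_scope.
Local Open Scope classical_set_scope.

Lemma ipE (R : realType) n (x y : 'cV[R]_n) : ip x y = \sum_i x i 0 * y i 0.
Proof. by rewrite /ip !mxE; apply: eq_bigr => i _; rewrite !mxE. Qed.

Lemma ipC (R : realType) n (x y : 'cV[R]_n) : ip x y = ip y x.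
Proof. by rewrite !ipE; apply: eq_bigr => i _; rewrite mulrC. Qed.

Lemma DgE (R : realType) m (u v : 'cV[R]_m) i j : (Dg u *m v) i j = u i 0 * v i j.
Proof. by rewrite /Dg mul_diag_mx !mxE. Qed.

Lemma l0E (R : realType) m (w : 'cV[R]_m) : l0 w = #|[set i : 'I_m | w i 0 != 0]%SET|.
Proof.
apply: eq_card => i; rewrite inE /=.
by apply/idP/idP; rewrite inE /= ?mem_setE ?in_setE /=; move=> ->.
Qed.

Lemma sum_ind (R : realType) m (P : pred 'I_m) :
  \sum_i ((P i)%:R : R) = (#|[set i | P i]%SET|)%:R.
Proof.
rewrite -sum1_card natr_sum [RHS]big_mkcond /=; apply: eq_bigr => i _.
by rewrite inE; case: (P i).
Qed.

Lemma w_eq (R : realType) m (ub vs : 'cV[R]_m) :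
  Dg (utilde ub) *m vtilde ub vs = Dg ub *m vs.
Proof.
apply/matrixP => i j; rewrite !DgE !mxE.
by case: ifP => _; rewrite ?mul1r // ord1.
Qed.

Lemma Aeq_eq (R : realType) r m (L : 'M[R]_(r, m)) (v u : 'cV[R]_m) :
  lp_Aeq L v *m u = L *m (Dg u *m v).
Proof.
apply/matrixP => j l; rewrite !mxE; apply: eq_bigr => i _.
by rewrite DgE !mxE ord1 -mulrA [v i 0 * _]mulrC.
Qed.
Lemma sub_colu (F : fieldType) m1 m2 n (A : 'M[F]_(m1, n)) (B : 'M[F]_(m2, n)) :
  (A <= col_mx A B)%MS.
Proof. by rewrite -addsmxE addsmxSl. Qed.
Lemma sub_cold (F : fieldType) m1 m2 n (A : 'M[F]_(m1, n)) (B : 'M[F]_(m2, n)) :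
  (B <= col_mx A B)%MS.
Proof. by rewrite -addsmxE addsmxSr. Qed.

Lemma frac_card (R : realType) m r (vs ub : 'cV[R]_m) (gamma : R) (k : nat)
  (Ae : 'M[R]_(r, m)) zs :
  is_bfs (lp_Aineq vs) (lp_bineq m gamma k) Ae zs ub ->
  (#|[set i : 'I_m | Defs.frac (ub i 0%R)]%SET| <= r + 2)%N.
Proof.
move=> [_ Hrk].
set Mi := \matrix_(_, _) _ in Hrk.
set N := [set i : 'I_m | ~~ Defs.frac (ub i 0)]%SET.
pose Q : 'M[R]_(#|N|, m) := \matrix_(j, i) (i == enum_val j)%:R.
pose G := col_mx (col_mx (const_mx 1 : 'M[R]_(1,m)) (\row_i (vs i 0 ^+ 2))) (col_mx Ae Q).
have QG : (Q <= G)%MS by apply: (submx_trans (sub_cold Ae Q)); apply: sub_cold.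
have AeG : (Ae <= G)%MS by apply: (submx_trans (sub_colu Ae Q)); apply: sub_cold.
have TG : (col_mx (const_mx 1 : 'M[R]_(1,m)) (\row_i (vs i 0 ^+ 2)) <= G)%MS
  by apply: sub_colu.
have rowN : forall i, i \in N -> (row i (1%:M : 'M[R]_m) <= G)%MS.
  move=> i Hi; apply: submx_trans QG.
  have -> : row i (1%:M : 'M[R]_m) = row (enum_rank_in Hi i) Q.
    by apply/rowP => i'; rewrite !mxE enum_rankK_in // eq_sym.
  exact: row_sub.
have sub : (col_mx Mi Ae <= G)%MS.
  rewrite col_mx_sub AeG andbT; apply/row_subP => j.
  have -> : row j Mi = if (lp_Aineq vs *m ub) j 0 == lp_bineq m gamma k j 0
                       then row j (lp_Aineq vs) else 0.
    by apply/rowP => i; rewrite !mxE; case: ifP; rewrite ?mxE.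
  case: ifP => Hact; last exact: sub0mx.
  move: Hact; rewrite /lp_Aineq /lp_bineq.
  case: (split_ordP j) => j0 -> Hact.
    rewrite rowKu; apply: submx_trans TG; apply: submx_trans (sub_colu _ _).
    exact: row_sub.
  move: Hact; case: (split_ordP j0) => j1 -> Hact.
    rewrite rowKd rowKu; apply: submx_trans TG; apply: submx_trans (sub_cold _ _).
    exact: row_sub.
  rewrite !mul_col_mx !col_mxEd in Hact *.
  rewrite !rowKd.
  move: Hact; case: (split_ordP j1) => i -> Hact.
    rewrite rowKu; move: Hact; rewrite !col_mxEu mulNmx mul1mx !mxE oppr_eq0 => /eqP H0.
    have -> : row i (- 1%:M : 'M[R]_m) = - row i 1%:M by apply/rowP => i'; rewrite !mxE.
    rewrite eqmx_opp; apply: rowN; rewrite inE /Defs.frac H0; by apply/negP => /andP [/eqP].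
  rewrite rowKd; move: Hact; rewrite !col_mxEd mul1mx !mxE => /eqP H1.
  apply: rowN; rewrite inE /Defs.frac H1; by apply/negP => /andP [_ /eqP].
have := leq_trans (mxrankS sub) (rank_leq_row _).
rewrite Hrk.
have : (#|[set i : 'I_m | Defs.frac (ub i 0%R)]%SET| + #|N|)%N = m.
  have -> : N = ~: [set i : 'I_m | Defs.frac (ub i 0)]%SET by apply/setP => i; rewrite !inE.
  by rewrite cardsC card_ord.
lia.
Qed.


Theorem corollary4p1 (R : realType) (n m r : nat) (f : 'cV[R]_n -> \bar R)
  (X : 'M[R]_(n, m)) (U : 'M[R]_(n, r)) (sigma : 'rV[R]_r) (V : 'M[R]_(m, r))
  (gamma : R) (k : nat) (vs us : 'cV[R]_m) (c ub : 'cV[R]_m) :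
  ext_closed f -> ext_convex f ->
  \rank X = r ->
  U^T *m U = 1%:M -> V^T *m V = 1%:M -> (forall j, 0 < sigma 0 j) ->
  X = U *m diag_mx sigma *m V^T ->
  0 < gamma ->
  relax_feas gamma k vs us ->
  (forall v u, relax_feas gamma k v u ->
     (f (X *m (Dg us *m vs)) <= f (X *m (Dg u *m v)))%E) ->
  let L := diag_mx sigma *m V^T in
  let zs := L *m (Dg us *m vs) in
  let Ai := lp_Aineq vs in
  let bi := lp_bineq m gamma k in
  let Ae := lp_Aeq L vs in
  is_bfs Ai bi Ae zs ub ->
  (forall u, poly_feas Ai bi Ae zs u -> ip c ub <= ip c u) ->
  let w := Dg (utilde ub) *m vtilde ub vs in
  let OPT := f (X *m w) in
  (pcon f X gamma (k + r + 2) - rho f X <= OPT)%E /\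
  (OPT <= pcon2 f X gamma k)%E /\
  (pcon2 f X gamma k <= pcon f X gamma k)%E.
Proof.
move=> _ _ _ _ _ _ HX _ Hfeas Hopt L zs Ai bi Ae Hbfs _ w OPT.
have Hfr := frac_card Hbfs.
have [[Hin Heq] _] := Hbfs.
have wE : w = Dg ub *m vs by rewrite /w w_eq.
have XL : X = U *m L by rewrite HX /L mulmxA.
have XwE : X *m w = X *m (Dg us *m vs).
  by rewrite XL -!(mulmxA U) wE -Aeq_eq -/Ae Heq.
have OPTE : OPT = f (X *m (Dg us *m vs)) by rewrite /OPT XwE.
have Hsum : (\sum_i ub i 0 <= k%:R)%R.
  have := Hin (lshift _ ord0).
  rewrite /Ai /bi /lp_Aineq /lp_bineq mul_col_mx !col_mxEu !mxE eqxx mulr1n.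
  by under eq_bigr => i _ do rewrite mxE mul1r.
have Hv : (\sum_i vs i 0 ^+ 2 * ub i 0 <= gamma)%R.
  have := Hin (rshift 1 (lshift _ ord0)).
  rewrite /Ai /bi /lp_Aineq /lp_bineq !mul_col_mx !col_mxEd !col_mxEu !mxE eqxx mulr1n.
  by under eq_bigr => i _ do rewrite mxE.
have Hbox : forall i, (0 <= ub i 0 <= 1)%R.
  move=> i; apply/andP; split.
    have := Hin (rshift 1 (rshift 1 (lshift m i))).
    rewrite /Ai /bi /lp_Aineq /lp_bineq !mul_col_mx !col_mxEd !col_mxEu mulNmx mul1mx !mxE.
    by rewrite oppr_le0.
  have := Hin (rshift 1 (rshift 1 (rshift m i))).
  by rewrite /Ai /bi /lp_Aineq /lp_bineq !mul_col_mx !col_mxEd mul1mx !mxE.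
have Hwfeas : (l0 w <= k + r + 2)%N /\ (ip w w <= gamma)%R.
  split.
    rewrite l0E.
    have S1 : (#|[set i : 'I_m | w i 0%R != 0%R]%SET| <=
               #|[set i : 'I_m | ub i 0%R == 1%R]%SET :|: [set i : 'I_m | Defs.frac (ub i 0%R)]%SET|)%N.
      apply: subset_leq_card; apply/fintype.subsetP => i; rewrite !inE wE DgE mulf_eq0 negb_or.
      rewrite /Defs.frac => /andP [-> _]; by case: (ub i 0 == 1).
    have S2 : (#|[set i : 'I_m | ub i 0%R == 1%R]%SET| <= k)%N.
      rewrite -(ler_nat R) -sum_ind; apply: le_trans Hsum.
      apply: ler_sum => i _; case: eqP => [->|_] //.
      by case/andP: (Hbox i).
    apply: (leq_trans S1); apply: (leq_trans (leq_card_setU _ _)).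
    by rewrite -addnA; apply: leq_add.
  rewrite ipE; apply: le_trans Hv; apply: ler_sum => i _.
  rewrite wE DgE.
  have /andP [h0 h1] := Hbox i.
  have hv : (0 <= vs i 0 ^+ 2)%R by apply: sqr_ge0.
  have h2 : (0 <= 1 - ub i 0)%R by rewrite subr_ge0.
  have := mulr_ge0 hv (mulr_ge0 h0 h2).
  nra.
split.
  have P1 : (pcon f X gamma (k + r + 2) <= OPT)%E.
    by apply: ereal_inf_lbound; exists w.
  case E : OPT P1 => [x| |] P1.
  - have rho0 : (0 <= rho f X)%E.
      apply: le_trans (ereal_sup_ubound _); last first.
        by exists w => //; rewrite -/OPT E.
      rewrite -/OPT E sube_ge0; last by apply/orP; right.
      apply: ge_ereal_sup => _ [y _ <-].
      have Hc : ((ip (X *m w) y)%:E - x%:E <= fconj f y)%E.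
        by apply: ereal_sup_ubound; exists (X *m w) => //; rewrite -/OPT E.
      case Ec : (fconj f y) Hc => [cy| |] Hc.
      + rewrite -EFinB lee_fin; rewrite -EFinB lee_fin in Hc.
        rewrite ipC; lra.
      + by rewrite /= leNye.
      + by rewrite leeNy_eq in Hc.
    apply: le_trans _ P1; rewrite -[Z in (_ <= Z)%E]sube0; exact: leeB.
  - exact: leey.
  - by move: P1; rewrite leeNy_eq => /eqP ->; rewrite addNye.
split.
  apply: le_ereal_inf_tmp => _ [vu Hvu <-]; rewrite OPTE; exact: Hopt.
apply: le_ereal_inf => _ [w' [Hl0 Hip] <-].
pose u' : 'cV[R]_m := \col_i ((w' i 0 != 0)%:R).
have Du : Dg u' *m w' = w'.
  apply/matrixP => i j; rewrite DgE mxE ord1; by case: eqP => [->|]; rewrite ?mulr0 ?mul1r.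
exists (w', u'); last by rewrite /= Du.
split; [|split].
- by move=> i; rewrite mxE; case: (_ != _); rewrite ?lexx ?ler01.
- under eq_bigr => i _ do rewrite mxE.
  by rewrite sum_ind ler_nat -l0E.
- by rewrite /= Du.
Qed.
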